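(* Let $a^*=(a^*_1,\dots,a^*_n)\in A$ be an aggregate strong Nash equilibrium of the $n$-player objective game $G$. Then $a^*$ is stable under perfect observability, i.e. there exist $\mu\in\mathcal M(\Theta^n)$ and a stable configuration $(\mu,b)$ whose aggregate outcome is the point mass at $a^*$.
   Context: Objective game: $G=(N,A,\pi)$ is a finite $n$-player normal-form game, $N=\{1,\dots,n\}$, finite action sets $A_i$, $A=\prod_{i\in N}A_i$, material payoff (fitness) functions $\pi_i:A\to\mathbb{R}$, extended multilinearly to mixed profiles in $\prod_{i}\Delta(A_i)$; $\pi=(\pi_1,\dots,\pi_n)$. A strategy profile $x\in\prod_i\Delta(A_i)$ is an aggregate strong Nash equilibrium if for every $J\subseteq N$ and every $\sigma_J\in\prod_{j\in J}\Delta(A_j)$ with $\sigma_j\neq x_j$ for some $j\in J$, $\sum_{j\in J}\pi_j(x)>\sum_{j\in J}\pi_j(\sigma_J,x_{-J})$. Preference types: $\Theta=\mathbb{R}^A$ (utility functions on $A$, extended multilinearly to mixed profiles). $\mathcal{M}(\Theta^n)$ is the set of product distributions $\mu=\mu_1\times\dots\times\mu_n$ on $\Theta^n$ with each $\mu_i$ finitely supported; $\operatorname{supp}\mu=\prod_i\operatorname{supp}\mu_i$, $\mu(\theta)=\prod_i\mu_i(\theta_i)$, $\mu_{-i}(\theta_{-i})=\prod_{j\neq i}\mu_j(\theta_j)$. Mutants: for nonempty $J\subseteq N$, a mutant sub-profile is $\tilde\theta_J\in\prod_{j\in J}(\Theta\setminus\operatorname{supp}\mu_j)$ with shares $\varepsilon=(\varepsilon_j)_{j\in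 J}\in(0,1)^{|J|}$, $\|\varepsilon\|=\max_j\varepsilon_j$; the post-entry distribution $\tilde\mu^\varepsilon$ has $\tilde\mu^\varepsilon_i=(1-\varepsilon_i)\mu_i+\varepsilon_i\delta_{\tilde\theta_i}$ for $i\in J$ and $\tilde\mu^\varepsilon_i=\mu_i$ otherwise. Perfect observability: for $\mu\in\mathcal M(\Theta^n)$, an equilibrium is a map $b:\operatorname{supp}\mu\to\prod_i\Delta(A_i)$ such that for each $\theta$, $b(\theta)$ is a Nash equilibrium of the normal-form game with action sets $A_i$ and payoffs $\theta_1,\dots,\theta_n$; $B_1(\mu)$ is the set of these; $(\mu,b)$ with $b\in B_1(\mu)$ is a configuration, with aggregate outcome $\varphi_{\mu,b}(a)=\sum_{\theta\in\operatorname{supp}\mu}\mu(\theta)\prod_{i}b_i(\theta)(a_i)$. Average fitness of $\theta_i\in\operatorname{supp}\mu_i$: $\Pi_{\theta_i}(\mu;b)=\sum_{\theta'_{-i}\in\operatorname{supp}\mu_{-i}}\mu_{-i}(\theta'_{-i})\pi_i(b(\theta_i,\theta'_{-i}))$. $(\mu,b)$ is balanced if for each $i$ all types in $\operatorname{supp}\mu_i$ have equal average fitness. Focal set: $B_1(\tilde\mu^\varepsilon;b)=\{\tilde b\in B_1(\tilde\mu^\varepsilon):\tilde b(\theta)=b(\theta)\ \forall\theta\in\operatorname{supp}\mu\}$. $(\mu,b)$ is stable if it is balanced and for every nonempty $J\subseteq N$ and every mutant sub-profile $\tilde\theta_J$ there is $\bar\epsilon\in(0,1)$ such that for every $\varepsilon\in(0,1)^{|J|}$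 with $\|\varepsilon\|<\bar\epsilon$ and every $\tilde b\in B_1(\tilde\mu^\varepsilon;b)$, either (i) there is $j\in J$ with $\Pi_{\theta_j}(\tilde\mu^\varepsilon;\tilde b)>\Pi_{\tilde\theta_j}(\tilde\mu^\varepsilon;\tilde b)$ for all $\theta_j\in\operatorname{supp}\mu_j$, or (ii) for every $i\in N$ all types in $\operatorname{supp}\tilde\mu^\varepsilon_i$ have equal average fitness under $(\tilde\mu^\varepsilon,\tilde b)$. *)

(* Defs.v *)
From HB Require Import structures.
From mathcomp Require Import all_boot all_order all_algebra.
Set Implicit Arguments. Unset Strict Implicit. Unset Printing Implicit Defensive.
Import Order.TTheory GRing.Theory Num.Theory.
Local Open Scope ring_scope.

Section Game.
Variables (R : realFieldType) (n : nat) (A : 'I_n -> finType).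

Definition prof := {dffun forall i : 'I_n, A i}.

Definition mstrat (i : 'I_n) := {ffun A i -> R}.
Definition mprof := forall i : 'I_n, mstrat i.

Definition is_mixed (i : 'I_n) (p : mstrat i) : Prop :=
  (forall a, 0 <= p a) /\ \sum_(a : A i) p a = 1.

Definition is_mprof (x : mprof) : Prop := forall i, is_mixed (x i).

Definition EU (u : prof -> R) (x : mprof) : R :=
  \sum_(a : prof) (\prod_(i < n) x i (a i)) * u a.

Definition pure_mix (a : prof) : mprof :=
  fun i => [ffun c : A i => if c == a i then 1 else 0].

Definition dev (J : {set 'I_n}) (sigma x : mprof) : mprof :=
  fun j => if j \in J then sigma j else x j.

Definition agg_strong_NE (pi : 'I_n -> prof -> R) (x : mprof) : Prop :=
  is_mprof x /\
  forall (J : {set 'I_n}) (sigma : mprof),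
    (forall j, j \in J -> is_mixed (sigma j)) ->
    (exists2 j, j \in J & sigma j != x j) ->
    \sum_(j in J) EU (pi j) (dev J sigma x) < \sum_(j in J) EU (pi j) x.

Definition Theta := {ffun prof -> R}.
Definition tprof := {ffun 'I_n -> Theta}.

Definition is_NE (th : tprof) (x : mprof) : Prop :=
  is_mprof x /\
  forall (i : 'I_n) (sigma : mprof), is_mixed (sigma i) ->
    EU (th i) (dev [set i] sigma x) <= EU (th i) x.

(* a finitely supported distribution mu_i on Theta: support psupp, weights pw *)
Record pop := Pop { psupp : seq Theta ; pw : Theta -> R }.

Definition valid_pop (p : pop) : Prop :=
  [/\ uniq (psupp p), (forall t, t \in psupp p -> 0 < pw p t)
    & \sum_(t <- psupp p) pw p t = 1].

(* product distribution mu = mu_1 x ... x mu_n *)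
Definition dist := 'I_n -> pop.
Definition valid_dist (mu : dist) : Prop := forall i, valid_pop (mu i).

Definition in_supp (mu : dist) (th : tprof) : Prop :=
  forall i, th i \in psupp (mu i).

(* enumeration of supp mu as a finite type *)
Definition suppT (mu : dist) := {dffun forall j : 'I_n, seq_sub (psupp (mu j))}.
Definition tval (mu : dist) (k : suppT mu) : tprof := [ffun j => val (k j)].

Definition smap := tprof -> mprof.

Definition B1 (mu : dist) (b : smap) : Prop :=
  forall th, in_supp mu th -> is_NE th (b th).

Definition outcome (mu : dist) (b : smap) (a : prof) : R :=
  \sum_(k : suppT mu) (\prod_(i < n) pw (mu i) (val (k i)))
                      * \prod_(i < n) b (tval k) i (a i).

Definition avg_fit (pi : 'I_n -> prof -> R) (mu : dist) (b : smap)
    (i : 'I_n) (t : Theta) : R :=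
  \sum_(k : suppT mu | val (k i) == t)
     (\prod_(j < n | j != i) pw (mu j) (val (k j))) * EU (pi i) (b (tval k)).

Definition balanced (pi : 'I_n -> prof -> R) (mu : dist) (b : smap) : Prop :=
  forall i t t', t \in psupp (mu i) -> t' \in psupp (mu i) ->
    avg_fit pi mu b i t = avg_fit pi mu b i t'.

Definition post_entry (mu : dist) (J : {set 'I_n}) (mt : 'I_n -> Theta)
    (eps : 'I_n -> R) : dist :=
  fun i => if i \in J then
     Pop (rcons (psupp (mu i)) (mt i))
         (fun t => if t == mt i then eps i else (1 - eps i) * pw (mu i) t)
   else mu i.

Definition focal (mu : dist) (b bt : smap) : Prop :=
  forall th, in_supp mu th -> forall i, bt th i = b th i.

Definition stable (pi : 'I_n -> prof -> R) (mu : dist) (b : smap) : Prop :=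
  balanced pi mu b /\
  forall (J : {set 'I_n}) (mt : 'I_n -> Theta),
    J != set0 ->
    (forall j, j \in J -> mt j \notin psupp (mu j)) ->
    exists eb : R, [/\ 0 < eb, eb < 1 &
      forall (eps : 'I_n -> R) (bt : smap),
        (forall j, j \in J -> 0 < eps j /\ eps j < eb) ->
        B1 (post_entry mu J mt eps) bt ->
        focal mu b bt ->
        (exists2 j, j \in J &
           forall t, t \in psupp (mu j) ->
             avg_fit pi (post_entry mu J mt eps) bt j (mt j)
               < avg_fit pi (post_entry mu J mt eps) bt j t)
        \/ balanced pi (post_entry mu J mt eps) bt].

End Game.

(* Main.v *)
Require Import Defs.
From HB Require Import structures.
From mathcomp Require Import all_boot all_order all_algebra.
From mathcomp Require Import lra ring.
From Stdlib Require Import Classical.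
Set Implicit Arguments. Unset Strict Implicit. Unset Printing Implicit Defensive.
Import Order.TTheory GRing.Theory Num.Theory.
Local Open Scope ring_scope.

Lemma prod_sum_dep (R : comNzRingType) (I : finType) (T_ : I -> finType)
  (F : forall i, T_ i -> R) :
  \prod_i \sum_(c : T_ i) F i c = \sum_(a : {dffun forall i, T_ i}) \prod_i F i (a i).
Proof.
pose P_ := fun i => [ffun c : T_ i => F i c].
transitivity (\prod_i \sum_(j in tagged_with T_ i) untag 0 (P_ i) j).
  apply: eq_bigr => i _.
  rewrite -(big_tag (fun i c => P_ i c)).
  by apply: eq_bigr => c _; rewrite ffunE.
rewrite bigA_distr_big_dep.
rewrite -(big_fprod _ _ P_) /=.
rewrite (reindex (@fprod_of_dffun I T_)); last exact/onW_bij/fprod_of_dffun_bij.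
apply: eq_bigr => a _; apply: eq_bigr => i _.
by rewrite /fprod_of_dffun fprodE ffunE.
Qed.

Lemma sum_seq_sub (R : comNzRingType) (T : choiceType) (s : seq T) (f : T -> R) :
  uniq s -> \sum_(x : seq_sub s) f (val x) = \sum_(t <- s) f t.
Proof.
move=> Us; rewrite -(big_map val xpredT f); congr (bigop _ _ _).
rewrite /index_enum !unlock /=; exact: val_seq_sub_enum.
Qed.

Lemma pos_lb (R : realFieldType) (X : finType) (P : pred X) (f : X -> R) :
  (forall x, P x -> 0 < f x) ->
  exists c : R, [/\ 0 < c, c <= 1/2 & forall x, P x -> c <= f x].
Proof.
move=> Hf.
suff: forall s : seq X, exists c : R, [/\ 0 < c, c <= 1/2 & forall x, x \in s -> P x -> c <= f x].
  by case/(_ (enum X)) => c [c0 c1 Hc]; exists c; split => // x; apply: Hc; rewrite mem_enum.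
elim => [|y s [c [c0 c1 Hc]]].
  by exists (1/2); split => //; rewrite divr_gt0 // ltr01.
case Py: (P y); last first.
  exists c; split => // x; rewrite inE => /orP [/eqP -> | xs]; first by rewrite Py.
  exact: Hc.
case: (lerP c (f y)) => cy.
  exists c; split => // x; rewrite inE => /orP [/eqP -> | xs] //; exact: Hc.
exists (f y); split => //; first exact: Hf.
  exact: le_trans (ltW cy) c1.
move=> x; rewrite inE => /orP [/eqP -> | xs] // Px.
exact: le_trans (ltW cy) (Hc x xs Px).
Qed.

Section Main.
Variables (R : realFieldType) (n : nat) (A : 'I_n -> finType).
Variables (pi : 'I_n -> prof A -> R) (astar : prof A).
Local Notation pa := (pure_mix R astar).

Lemma EU_ext (u : prof A -> R) (x y : mprof R A) :
  (forall i c, x i c = y i c) -> EU u x = EU u y.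
Proof.
move=> H; apply: eq_bigr => a _; congr (_ * _); apply: eq_bigr => i _; exact: H.
Qed.

Lemma prod_pure (b a : prof A) :
  \prod_i pure_mix R b i (a i) = (a == b)%:R.
Proof.
case: eqP => [-> | ne].
  by rewrite big1 // => i _; rewrite ffunE eqxx.
have [i Hi] : exists i, a i != b i.
  apply/existsP; apply: contraT; rewrite negb_exists => /forallP H.
  by case: ne; apply/ffunP => i; apply/eqP; move: (H i); rewrite negbK.
by rewrite (bigD1 i) //= ffunE (negbTE Hi) mul0r.
Qed.

Lemma EU_pure (u : prof A -> R) b : EU u (pure_mix R b) = u b.
Proof.
rewrite /EU (bigD1 b) //= prod_pure eqxx mul1r big1 ?addr0 // => a /negbTE H.
by rewrite prod_pure H mul0r.
Qed.

Lemma mixed_pure (b : prof A) (i : 'I_n) : is_mixed (pure_mix R b i).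
Proof.
split=> [c|]; first by rewrite ffunE; case: eqP.
rewrite (bigD1 (b i)) //= ffunE eqxx big1 ?addr0 // => c /negbTE H.
by rewrite ffunE H.
Qed.

Lemma wsum (x : mprof R A) : is_mprof x -> \sum_(a : prof A) \prod_i x i (a i) = 1.
Proof.
move=> Hx; rewrite -(prod_sum_dep (fun i c => x i c)) big1 // => i _; by case: (Hx i).
Qed.

Definition theta (i : 'I_n) : Theta R A := [ffun a : prof A => ((a i == astar i) : nat)%:R].

Lemma EU_theta (x : mprof R A) i : is_mprof x -> EU (theta i) x = x i (astar i).
Proof.
move=> Hx.
transitivity (\sum_(a : prof A) \prod_k (x k (a k) * (if k == i then ((a k == astar k) : nat)%:R else 1))).
  apply: eq_bigr => a _; rewrite big_split /= -big_mkcond big_pred1_eq ffunE //.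
rewrite -(prod_sum_dep (fun k c => x k c * (if k == i then ((c == astar k) : nat)%:R else 1))) (bigD1 i) //=.
rewrite [X in _ * X]big1 ?mulr1; last first.
  move=> k /negbTE ->; under eq_bigr do rewrite mulr1; by case: (Hx k).
under eq_bigr do rewrite eqxx.
rewrite (bigD1 (astar i)) //= eqxx mulr1 big1 ?addr0 // => c /negbTE ->.
by rewrite mulr0.
Qed.

Lemma dev_mprof (J : {set 'I_n}) (sigma x : mprof R A) :
  is_mprof x -> (forall j, j \in J -> is_mixed (sigma j)) -> is_mprof (dev J sigma x).
Proof. by move=> Hx Hs i; rewrite /dev; case: ifP => Hi; [apply: Hs | apply: Hx]. Qed.

Lemma mixed_le1 i (p : mstrat R A i) : is_mixed p -> forall c, p c <= 1.
Proof.
case=> H0 Hs c; rewrite -Hs (bigD1 c) //= lerDl; exact: sumr_ge0.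
Qed.

Lemma resident (th : tprof R A) (x : mprof R A) i :
  is_NE th x -> th i = theta i -> forall c, x i c = pa i c.
Proof.
case=> Hx HNE Hth.
have := HNE i pa (mixed_pure astar i).
have Hd : is_mprof (dev [set i] pa x).
  by apply: dev_mprof => // j _; exact: mixed_pure.
rewrite Hth !EU_theta // /dev set11 ffunE eqxx => H1.
case: (Hx i) => H0 Hs.
have xa : x i (astar i) = 1 by apply/le_anti; rewrite H1 mixed_le1.
move: Hs; rewrite (bigD1 (astar i)) //= xa => /eqP; rewrite -subr_eq0 addrAC subrr add0r.
move/eqP/psumr_eq0P => Hr c; rewrite ffunE; case: eqP => [->//|/eqP ne].
by rewrite Hr.
Qed.

Lemma prof_neq (a b : prof A) : a != b -> exists i, a i != b i.
Proof.
move=> ne; apply/existsP; apply: contraT; rewrite negb_exists => /forallP H.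
have E : a = b by apply/ffunP => i; apply/eqP; move: (H i); rewrite negbK.
by rewrite E eqxx in ne.
Qed.

Lemma agg_pos : agg_strong_NE pi pa ->
  forall (K : {set 'I_n}) (a : prof A), (forall i, i \notin K -> a i = astar i) ->
  a != astar -> 0 < \sum_(j in K) (pi j astar - pi j a).
Proof.
case=> _ H K a Ha ne.
have [i Hi] := prof_neq ne.
have iK : i \in K by apply: contraT => /Ha E; rewrite E eqxx in Hi.
have := H K (pure_mix R a) (fun j _ => mixed_pure a j).
have Hne : pure_mix R a i != pa i.
  apply/negP => /eqP/ffunP/(_ (a i)); rewrite !ffunE eqxx (negbTE Hi).
  by move=> E; move: (@oner_neq0 R); rewrite E eqxx.
case/(_ (ex_intro2 _ _ i iK Hne)) => /=.
have E : forall u, EU u (dev K (pure_mix R a) pa) = u a.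
  move=> u; rewrite -(EU_pure u a); apply: EU_ext => j c; rewrite /dev.
  case: ifP => // /negbT /Ha; rewrite !ffunE => ->; done.
under eq_bigr do rewrite E.
under [X in _ < X]eq_bigr do rewrite EU_pure.
by rewrite sumrB subr_gt0.
Qed.

Lemma exists_c : agg_strong_NE pi pa -> exists c : R, [/\ 0 < c, c <= 1/2 &
  forall (K : {set 'I_n}) (a : prof A), (forall i, i \notin K -> a i = astar i) ->
  a != astar -> c * \sum_j `|pi j a - pi j astar| <= \sum_(j in K) (pi j astar - pi j a)].
Proof.
move=> Hagg.
pose P := fun x : ({set 'I_n} * prof A)%type =>
  [forall i, (i \notin x.1) ==> (x.2 i == astar i)] && (x.2 != astar).
pose f := fun x : ({set 'I_n} * prof A)%type =>
  (\sum_(j in x.1) (pi j astar - pi j x.2)) / (\sum_j `|pi j x.2 - pi j astar| + 1).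
have Spos : forall a : prof A, 0 < \sum_j `|pi j a - pi j astar| + 1.
  move=> a; have : 0 <= \sum_j `|pi j a - pi j astar| by apply: sumr_ge0 => j _.
  lra.
case: (@pos_lb R _ P f) => [[K a] /andP [/forallP H ne] | c [c0 c1 Hc]].
  rewrite /f /=; apply: divr_gt0 => //.
  apply: agg_pos => // i Hi; apply/eqP; exact: (implyP (H i) Hi).
exists c; split => // K a Ha ne.
have PKa : P (K, a).
  rewrite /P /= ne andbT; apply/forallP => i; apply/implyP => Hi; apply/eqP; exact: Ha.
have := Hc (K, a) PKa; rewrite /f /= ler_pdivlMr // mulrDr mulr1.
lra.
Qed.

Lemma br_pure (c : R) (eps : 'I_n -> R) (J K : {set 'I_n}) (a : prof A) :
  (forall (K : {set 'I_n}) (a : prof A), (forall i, i \notin K -> a i = astar i) ->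
    a != astar -> c * \sum_j `|pi j a - pi j astar| <= \sum_(j in K) (pi j astar - pi j a)) ->
  0 <= c -> (forall j, j \in J -> 0 <= eps j <= c) ->
  (forall i, i \notin K -> a i = astar i) ->
  \sum_(j in K) (pi j a - pi j astar) - \sum_(j in J) eps j * (pi j a - pi j astar) <= 0.
Proof.
move=> Hc c0 He Ha.
case: (eqVneq a astar) => [-> | ne].
  by rewrite big1 ?[X in _ - X]big1 ?subrr // => j _; rewrite subrr ?mulr0.
have Hg := Hc K a Ha ne.
have h1 : - \sum_(j in J) eps j * (pi j a - pi j astar) <= c * \sum_j `|pi j a - pi j astar|.
  rewrite -sumrN mulr_sumr.
  apply: (@le_trans _ _ (\sum_(j in J) c * `|pi j a - pi j astar|)).
    apply: ler_sum => j Hj; case/andP: (He j Hj) => e0 ec.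
    apply: (le_trans (ler_norm _)); rewrite normrN normrM (ger0_norm e0).
    by apply: ler_wpM2r.
  rewrite [X in _ <= X](bigID (mem J)) /= lerDl.
  by apply: sumr_ge0 => j _; apply: mulr_ge0.
have h2 : \sum_(j in K) (pi j a - pi j astar) = - \sum_(j in K) (pi j astar - pi j a).
  by rewrite -sumrN; apply: eq_bigr => j _; rewrite opprB.
lra.
Qed.

Lemma EU_dev_star (u : prof A -> R) (x : mprof R A) : is_mprof x ->
  EU u x - u astar = \sum_(a : prof A) (\prod_i x i (a i)) * (u a - u astar).
Proof.
move=> Hx; under eq_bigr do rewrite mulrBr.
by rewrite sumrB -mulr_suml wsum // mul1r.
Qed.

Lemma br_mixed (c : R) (eps : 'I_n -> R) (J K : {set 'I_n}) (x : mprof R A) :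
  (forall (K : {set 'I_n}) (a : prof A), (forall i, i \notin K -> a i = astar i) ->
    a != astar -> c * \sum_j `|pi j a - pi j astar| <= \sum_(j in K) (pi j astar - pi j a)) ->
  0 <= c -> (forall j, j \in J -> 0 <= eps j <= c) ->
  is_mprof x -> (forall i, i \notin K -> forall d, x i d = pa i d) ->
  \sum_(j in K) (EU (pi j) x - pi j astar) - \sum_(j in J) eps j * (EU (pi j) x - pi j astar) <= 0.
Proof.
move=> Hc c0 He Hx HK.
under eq_bigr do rewrite EU_dev_star //.
under [X in _ - X]eq_bigr do rewrite EU_dev_star // mulr_sumr.
rewrite [X in X - _]exchange_big [X in _ - X]exchange_big /= -sumrB.
apply: sumr_le0 => a _.
have w0 : 0 <= \prod_i x i (a i) by apply: prodr_ge0 => i _; case: (Hx i).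
case: (boolP [forall i, (i \notin K) ==> (a i == astar i)]) => [/forallP Ha | /forallPn [i]].
  rewrite -mulr_sumr.
  under [X in _ - X]eq_bigr do rewrite mulrCA.
  rewrite -mulr_sumr -mulrBr; apply: mulr_ge0_le0 => //.
  apply: (br_pure Hc c0 He) => i Hi; apply/eqP; exact: (implyP (Ha i) Hi).
rewrite negb_imply => /andP [Hi ne].
have wz : \prod_i x i (a i) = 0 by rewrite (bigD1 i) //= HK // ffunE (negbTE ne) mul0r.
rewrite wz; under eq_bigr do rewrite mul0r.
under [X in _ - X]eq_bigr do rewrite mul0r mulr0.
by rewrite !big1_eq subrr.
Qed.

Lemma suppT_sum (mu : dist R A) (F : 'I_n -> Theta R A -> R) :
  (forall i, uniq (psupp (mu i))) ->
  \sum_(k : suppT mu) \prod_i F i (val (k i)) = \prod_i \sum_(t <- psupp (mu i)) F i t.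
Proof.
move=> U; rewrite -(prod_sum_dep (fun i (s : seq_sub (psupp (mu i))) => F i (val s))).
by apply: eq_bigr => i _; exact: sum_seq_sub.
Qed.

Definition mu0 : dist R A := fun i => Pop [:: theta i] (fun _ => 1).
Definition b0 : smap R A := fun _ => pa.

Section Post.
Variables (J : {set 'I_n}) (mt : 'I_n -> Theta R A) (eps : 'I_n -> R).
Hypothesis Hmt : forall j, j \in J -> mt j \notin psupp (mu0 j).
Let mu' := post_entry mu0 J mt eps.

Lemma mtne j : j \in J -> (theta j == mt j) = false.
Proof. by move/Hmt; rewrite /mu0 /= inE eq_sym => /negbTE. Qed.

Lemma supp' i : psupp (mu' i) = if i \in J then [:: theta i; mt i] else [:: theta i].
Proof. by rewrite /mu' /post_entry; case: ifP. Qed.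

Lemma pw' i t : pw (mu' i) t = if i \in J then (if t == mt i then eps i else 1 - eps i) else 1.
Proof. by rewrite /mu' /post_entry; case: ifP => //= _; rewrite mulr1. Qed.

Lemma U' i : uniq (psupp (mu' i)).
Proof. by rewrite supp'; case: ifP => Hi //=; rewrite inE mtne. Qed.

Lemma memk (k : suppT mu') i : val (k i) = theta i \/ (i \in J /\ val (k i) = mt i).
Proof.
have : val (k i) \in psupp (mu' i) := ssvalP (k i).
move: (val (k i)) => v.
rewrite supp'; case: ifP => Hi; rewrite !inE.
  by case/orP => /eqP ->; [left | right].
by move/eqP ->; left.
Qed.

Lemma Ssum j s : s \in psupp (mu' j) ->
  \sum_(k : suppT mu' | val (k j) == s) \prod_i pw (mu' i) (val (k i)) = pw (mu' j) s.
Proof.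
move=> Hs; rewrite big_mkcond /=.
transitivity (\sum_(k : suppT mu') \prod_i (pw (mu' i) (val (k i)) *
   (if i == j then ((val (k i) == s) : nat)%:R else 1))).
  apply: eq_bigr => k _; rewrite big_split /= -big_mkcond big_pred1_eq.
  by case: eqP => _; rewrite ?mulr1 ?mulr0.
rewrite (suppT_sum (fun i t => pw (mu' i) t * (if i == j then ((t == s) : nat)%:R else 1)) (@U' )).
rewrite (bigD1 j) //= [X in _ * X]big1 ?mulr1; last first.
  move=> i /negbTE ->; under eq_bigr do rewrite mulr1.
  rewrite supp'; case: ifP => Hi; rewrite !big_cons big_nil !pw' Hi ?eqxx ?mtne //.
  by rewrite addr0 subrK.
  by rewrite addr0.
rewrite eqxx; move: Hs; rewrite supp' pw'; case: ifP => Hj; rewrite !inE.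
  case/orP => /eqP ->; rewrite !big_cons big_nil !pw' Hj ?eqxx ?mtne // ?(eq_sym (mt j)) ?mtne //=.
    by rewrite !mulr1 mulr0 !addr0.
  by rewrite mulr0 mulr1 add0r addr0.
by move/eqP ->; rewrite big_cons big_nil pw' Hj eqxx mulr1 addr0.
Qed.

Variable (bt : smap R A).
Hypothesis HB : B1 mu' bt.

Lemma res (k : suppT mu') i : val (k i) = theta i -> forall d, bt (Defs.tval k) i d = pa i d.
Proof.
move=> Hk; apply: (@resident (Defs.tval k) (bt (Defs.tval k)) i).
  by apply: HB => j; rewrite ffunE; exact: ssvalP.
by rewrite ffunE Hk.
Qed.

Lemma Aeq j t : pw (mu' j) t * avg_fit pi mu' bt j t =
  \sum_(k : suppT mu' | val (k j) == t) (\prod_i pw (mu' i) (val (k i))) * EU (pi j) (bt (Defs.tval k)).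
Proof.
rewrite /avg_fit mulr_sumr; apply: eq_bigr => k /eqP Hk.
by rewrite [in RHS](bigD1 j) //= Hk mulrA.
Qed.

Lemma split_k j (F : suppT mu' -> R) : j \in J ->
  \sum_k F k = \sum_(k : suppT mu' | val (k j) == mt j) F k + \sum_(k : suppT mu' | val (k j) == theta j) F k.
Proof.
move=> Hj; rewrite (bigID (fun k : suppT mu' => val (k j) == mt j)) /=; congr (_ + _).
apply: eq_bigl => k; case: (memk k j) => [-> | [_ ->]].
  by rewrite mtne // eqxx.
by rewrite eqxx eq_sym mtne.
Qed.

Lemma Ej j : j \in J ->
  eps j * (1 - eps j) * (avg_fit pi mu' bt j (mt j) - avg_fit pi mu' bt j (theta j)) =
  \sum_(k : suppT mu') (\prod_i pw (mu' i) (val (k i))) *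
     (((val (k j) == mt j) : nat)%:R * (EU (pi j) (bt (Defs.tval k)) - pi j astar)
      - eps j * (EU (pi j) (bt (Defs.tval k)) - pi j astar)).
Proof.
move=> Hj.
have h1 := Aeq j (mt j); rewrite pw' Hj eqxx in h1.
have h2 := Aeq j (theta j); rewrite pw' Hj mtne // in h2.
have h3 : \sum_(k : suppT mu' | val (k j) == mt j) \prod_i pw (mu' i) (val (k i)) = eps j.
  by rewrite Ssum ?pw' ?Hj ?eqxx // supp' Hj !inE eqxx orbT.
have h4 : \sum_(k : suppT mu' | val (k j) == theta j) \prod_i pw (mu' i) (val (k i)) = 1 - eps j.
  by rewrite Ssum ?pw' ?Hj ?mtne // supp' Hj !inE eqxx.
rewrite (split_k _ Hj).
rewrite (eq_bigr (fun k : suppT mu' => (1 - eps j) * ((\prod_i pw (mu' i) (val (k i))) * EU (pi j) (bt (Defs.tval k)))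
   - ((1 - eps j) * pi j astar) * (\prod_i pw (mu' i) (val (k i))))); last first.
  by move=> k /eqP ->; rewrite eqxx /=; ring.
rewrite [X in _ = _ + X](eq_bigr (fun k : suppT mu' => (- eps j) * ((\prod_i pw (mu' i) (val (k i))) * EU (pi j) (bt (Defs.tval k)))
   + (eps j * pi j astar) * (\prod_i pw (mu' i) (val (k i))))); last first.
  by move=> k /eqP ->; rewrite mtne //=; ring.
rewrite sumrB big_split /= -!mulr_sumr -h1 -h2 h3 h4.
ring.
Qed.

Lemma inS (k : suppT mu') : in_supp mu' (Defs.tval k).
Proof. by move=> j; rewrite ffunE; exact: ssvalP. Qed.

Lemma total (c : R) :
  (forall (K : {set 'I_n}) (a : prof A), (forall i, i \notin K -> a i = astar i) ->
    a != astar -> c * \sum_j `|pi j a - pi j astar| <= \sum_(j in K) (pi j astar - pi j a)) ->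
  0 <= c -> c <= 1/2 -> (forall j, j \in J -> 0 <= eps j <= c) ->
  \sum_(j in J) eps j * (1 - eps j) *
     (avg_fit pi mu' bt j (mt j) - avg_fit pi mu' bt j (theta j)) <= 0.
Proof.
move=> Hc c0 c1 He.
under eq_bigr => j Hj do rewrite Ej //.
rewrite exchange_big /=; apply: sumr_le0 => k _.
rewrite -mulr_sumr; apply: mulr_ge0_le0.
  apply: prodr_ge0 => i _; rewrite pw'; case: ifP => // Hi.
  case/andP: (He i Hi) => e0 ec; case: ifP => // _; lra.
rewrite sumrB.
have -> : \sum_(i in J) ((val (k i) == mt i) : nat)%:R * (EU (pi i) (bt (Defs.tval k)) - pi i astar)
  = \sum_(i in [set i in J | val (k i) == mt i]) (EU (pi i) (bt (Defs.tval k)) - pi i astar).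
  rewrite [RHS](eq_bigl (fun i => (i \in J) && (val (k i) == mt i))); last by move=> i; rewrite inE.
  rewrite big_mkcondr /=; apply: eq_bigr => i _; by case: (_ == _); rewrite ?mul1r ?mul0r.
apply: (br_mixed Hc c0 He); first by case: (HB (inS k)).
move=> i Hi; apply: res; case: (memk k i) => // [[iJ Hk]].
by move: Hi; rewrite inE iJ Hk eqxx.
Qed.

End Post.

Lemma stable0 : agg_strong_NE pi pa -> stable pi mu0 b0.
Proof.
move=> Hagg; have [c [c0 c1 Hc]] := exists_c Hagg.
split.
  by move=> i t t'; rewrite /mu0 /= !inE => /eqP -> /eqP ->.
move=> J mt HJ Hmt; exists c; split => //; first lra.
move=> eps bt He HB _.
set mu' := post_entry mu0 J mt eps.
case: (classic (exists2 j, j \in J & forall t, t \in psupp (mu0 j) ->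
   avg_fit pi mu' bt j (mt j) < avg_fit pi mu' bt j t)) => [H|H]; [by left | right].
have Hge : forall j, j \in J -> 0 <= avg_fit pi mu' bt j (mt j) - avg_fit pi mu' bt j (theta j).
  move=> j Hj; rewrite subr_ge0 leNgt; apply/negP => Hlt; apply: H; exists j => // t.
  by rewrite /mu0 /= inE => /eqP ->.
have He' : forall j, j \in J -> 0 <= eps j <= c.
  by move=> j /He [e0 e1]; rewrite !ltW.
have Ht := total Hmt HB Hc (ltW c0) c1 He'.
have nn : forall j, j \in J -> 0 <= eps j * (1 - eps j) *
   (avg_fit pi mu' bt j (mt j) - avg_fit pi mu' bt j (theta j)).
  move=> j Hj; case: (He j Hj) => e0 e1; apply: mulr_ge0; last exact: Hge.
  apply: mulr_ge0; lra.
have Hz : forall j, j \in J -> avg_fit pi mu' bt j (mt j) = avg_fit pi mu' bt j (theta j).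
  have : \sum_(j in J) eps j * (1 - eps j) *
     (avg_fit pi mu' bt j (mt j) - avg_fit pi mu' bt j (theta j)) == 0.
    by rewrite eq_le Ht sumr_ge0.
  move/eqP => H0 j Hj; have := psumr_eq0P nn H0 Hj.
  case: (He j Hj) => e0 e1.
  move/eqP; rewrite mulf_eq0 => /orP [|/eqP]; last by move/eqP; rewrite subr_eq0 => /eqP.
  rewrite mulf_eq0 => /orP [/eqP|/eqP] h; lra.
move=> i t t'; rewrite /mu' supp'; case: ifP => Hi; rewrite !inE.
  by case/orP => /eqP ->; case/orP => /eqP ->; rewrite ?Hz.
by move=> /eqP -> /eqP ->.
Qed.

End Main.

Theorem mainTheorem5 (R : realFieldType) (n : nat) (A : 'I_n -> finType)
    (pi : 'I_n -> prof A -> R) (astar : prof A) :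
  agg_strong_NE pi (pure_mix R astar) ->
  exists (mu : dist R A) (b : smap R A),
    [/\ valid_dist mu, B1 mu b, stable pi mu b
      & forall a : prof A, outcome mu b a = (a == astar)%:R].
Proof.
move=> Hagg; exists (@mu0 R n A astar), (@b0 R n A astar); split.
- move=> i; split => //=; last by rewrite big_cons big_nil addr0.
- move=> th Hth; split; first by move=> i; exact: mixed_pure.
  move=> i sigma Hs.
  have thi : th i = @theta R n A astar i by move: (Hth i); rewrite inE => /eqP.
  have Hd : is_mprof (dev [set i] sigma (@b0 R n A astar th)).
    apply: dev_mprof; first by move=> j; exact: mixed_pure.
    by move=> j; rewrite inE => /eqP ->.
  rewrite thi EU_theta // /b0 EU_pure /dev set11 ffunE eqxx.
  exact: mixed_le1.
- exact: stable0.
- move=> a; rewrite /outcome.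
  under eq_bigr do rewrite prod_pure.
  rewrite -mulr_suml (suppT_sum (fun i t => pw (@mu0 R n A astar i) t)) //.
  by rewrite big1 ?mul1r // => i _; rewrite big_cons big_nil addr0.
Qed.
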